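(* The Dd-MDP corresponding to any online job scheduling (OJS) instance admits a deterministic chasing oracle whose chasing regret is at most $2\cdot CW$ (for any target pricing policy, any initial round and any initial bandwidth vector).
   Context: OJS problem: there are $N$ slots; slot $i\in[N]$ has bandwidth $c(i)$. $T$ jobs arrive in order $t=1,\dots,T$; job $t$ has arrival slot $a_t$, departure slot $d_t\ge a_t$, length $1\le l_t\le d_t-a_t+1$ and value $v_t\in[0,1)$, chosen by an adversary; jobs are reported at the beginning of their arrival slot in the order of their indices (so $a_1\le a_2\le\cdots\le a_T$). $C\ge\max_ic(i)$ and $W\ge\max_t(d_t-a_t+1)$. Let $A_t=[a_t,a_t+W-1]$ and $\mathcal I_t=\{[i,i+l_t-1]:a_t\le i\le d_t-l_t+1\}$. For job $t$ the mechanism posts $\bm p\in(0,1]^{A_t}$ (before seeing $d_t,l_t,v_t$); the job receives one bandwidth unit of each slot in $\hat A^{\bm p}_t=\emptyset$ if $v_t<\min_{I\in\mathcal I_t}\sum_{i\in I}\bm p(i)$, and otherwise $\hat A^{\bm p}_t=\arg\min_{I\in\mathcal I_t}\sum_{i\in I}\bm p(i)$ (lexicographic ties), paying $\hat q^{\bm p}_t=\sum_{i\in\hat A^{\bm p}_t}\bm p(i)$. The bandwidth vector $\bm\lambda_t\in\{0,\dots,C\}^{A_t}$ records remaining bandwidth: $\bm\lambda_t(i)=c(i)$ if slot $i$ was not allocated to jobs $1,\dots,t-1$, and $\bm\lambda_{t+1}(i)=\bm\lambda_t(i)-1$ if slot $i$ is allocated to job $t$ and $i\in A_{t+1}$. $\bm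 p$ is feasible for $\bm\lambda$ if $\bm p(i)=1$ whenever $\bm\lambda(i)=0$. A pricing policy maps bandwidth vectors to feasible price vectors. Corresponding Dd-MDP: states are bandwidth vectors; actions at a state are feasible price vectors; reward $f_t(s,x)=\hat q^x_t$; transition $g_t(s,x)=s'$ where $s'(i)=s(i)-\mathbb{1}[i\in\hat A^x_t]$ for $i\in A_t\cap A_{t+1}$ and $s'(i)=c(i)$ for $i\in A_{t+1}\setminus A_t$. A policy $\gamma$ is simulated from the true start: $s^\gamma_1=s_1$, $x^\gamma_t=\gamma(s^\gamma_t)$, $s^\gamma_{t+1}=g_t(s^\gamma_t,x^\gamma_t)$. Chasing oracle: given target policy $\gamma$, invoked at round $t_{\mathrm{init}}$ with an arbitrary initial state $s_{\mathrm{init}}$, it outputs in each round $t\ge t_{\mathrm{init}}$ an action $\hat x(t)$ feasible for $\hat s(t)$, where $\hat s(t_{\mathrm{init}})=s_{\mathrm{init}}$, $\hat s(t)=g_{t-1}(\hat s(t-1),\hat x(t-1))$, observing $g_t,f_t$ after each round; its chasing regret up to any halting round $t_{\mathrm{final}}\ge t_{\mathrm{init}}$ is $\sum_{t=t_{\mathrm{init}}}^{t_{\mathrm{final}}}f_t(s^\gamma_t,x^\gamma_t)-\sum_{t=t_{\mathrm{init}}}^{t_{\mathrm{final}}}\mathbb{E}[f_t(\hat s(t),\hat x(t))]$. *)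

(* Defs.v *)
From HB Require Import structures.
From mathcomp Require Import all_boot all_order all_algebra.
Set Implicit Arguments. Unset Strict Implicit. Unset Printing Implicit Defensive.
Import Order.TTheory GRing.Theory Num.Theory.
Local Open Scope ring_scope.

Section OJS.
Variable R : realFieldType.
Variable W : nat.

(* A bandwidth vector / price vector on the window A_t = [a_t, a_t+W-1] is
   represented relatively: index k : 'I_W stands for slot a_t + k. *)
Definition state := {ffun 'I_W -> nat}.
Definition action := {ffun 'I_W -> R}.

Definition icost (p : action) (l k : nat) : R :=
  \sum_(j < W | (k <= j < k + l)%N) p j.

(* number of admissible starting offsets: starts a_t + k with
   0 <= k <= d_t - l_t + 1 - a_t *)
Definition nstarts (a d l : nat) : nat := (d.+1 - a - l).+1.

Definition mincost (p : action) (a d l : nat) : R :=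
  \big[Order.min/icost p l 0]_(k < nstarts a d l) icost p l k.

(* lexicographically first minimizer (intervals of equal length are ordered
   lexicographically by their start) *)
Definition beststart (p : action) (a d l : nat) : nat :=
  find (fun k => icost p l k == mincost p a d l) (iota 0 (nstarts a d l)).

Definition allocated (p : action) (a d l : nat) (v : R) (j : 'I_W) : bool :=
  ~~ (v < mincost p a d l) &&
  (beststart p a d l <= j < beststart p a d l + l)%N.

Definition payment (p : action) (a d l : nat) (v : R) : R :=
  \sum_(j < W | allocated p a d l v j) p j.

Definition next_state (c : nat -> nat) (a a' : nat) (s : state)
    (al : 'I_W -> bool) : state :=
  [ffun k : 'I_W =>
     let i := (a' + k)%N in
     if (a <= i < a + W)%N then
       let j := insubd k (i - a)%N in (s j - (if al j then 1 else 0))%N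
     else c i].

Definition feasible (s : state) (x : action) : Prop :=
  forall k, 0 < x k <= 1 /\ (s k = 0%N -> x k = 1).

Definition is_state (C : nat) (s : state) : Prop := forall k, (s k <= C)%N.

(* a pricing policy: (window start, bandwidth vector) -> price vector *)
Definition policy := nat -> state -> action.

Definition pricing_policy (C : nat) (gam : policy) : Prop :=
  forall a s, is_state C s -> feasible s (gam a s).

Definition rew (a d l : nat -> nat) (v : nat -> R) (t : nat) :
    state -> action -> R :=
  fun _ x => payment x (a t) (d t) (l t) (v t).

Definition trans (c : nat -> nat) (a d l : nat -> nat) (v : nat -> R)
    (t : nat) : state -> action -> state :=
  fun s x => next_state c (a t) (a t.+1) s (allocated x (a t) (d t) (l t) (v t)).

Definition start_state (c : nat -> nat) (a : nat -> nat) : state :=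
  [ffun k : 'I_W => c (a 1%N + k)%N].

(* trajectory of a policy simulated from the true start:
   pol_state n = s^gam_{n+1} *)
Fixpoint pol_state (c : nat -> nat) (a d l : nat -> nat) (v : nat -> R)
    (gam : policy) (n : nat) : state :=
  match n with
  | 0 => start_state c a
  | n'.+1 =>
      let s := pol_state c a d l v gam n' in
      trans c a d l v n'.+1 s (gam (a n'.+1) s)
  end.

Definition pol_rew c a d l v (gam : policy) (t : nat) : R :=
  let s := pol_state c a d l v gam t.-1 in rew a d l v t s (gam (a t) s).

(* What a chasing oracle has observed before round t: for each earlier round u,
   the window start a_u and the functions f_u, g_u. *)
Definition history :=
  seq (nat * (state -> action -> R) * (state -> action -> state)).

Definition hist c (a d l : nat -> nat) (v : nat -> R) (t : nat) : history :=
  [seq (a u, rew a d l v u, trans c a d l v u) | u <- iota 1 t.-1].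

(* A deterministic chasing oracle: given the target policy, the initial round
   t_init, the initial state s_init, the observed history and the current
   window start a_t, it outputs the price vector of round t. *)
Definition oracle := policy -> nat -> state -> history -> nat -> action.

(* oracle action and state at round ti + n *)
Fixpoint orc_state (O : oracle) c a d l v (gam : policy) (ti : nat)
    (si : state) (n : nat) : state :=
  match n with
  | 0 => si
  | n'.+1 =>
      let t := (ti + n')%N in
      let s := orc_state O c a d l v gam ti si n' in
      trans c a d l v t s (O gam ti si (hist c a d l v t) (a t))
  end.

Definition orc_act (O : oracle) c a d l v (gam : policy) (ti : nat)
    (si : state) (n : nat) : action :=
  O gam ti si (hist c a d l v (ti + n)%N) (a (ti + n)%N).

Definition orc_rew (O : oracle) c a d l v gam ti si (t : nat) : R :=
  rew a d l v t (orc_state O c a d l v gam ti si (t - ti))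
                (orc_act O c a d l v gam ti si (t - ti)).

(* chasing regret over rounds ti..tf (deterministic oracle: no expectation) *)
Definition chasing_regret (O : oracle) c a d l v gam ti si (tf : nat) : R :=
  \sum_(ti <= t < tf.+1) pol_rew c a d l v gam t
  - \sum_(ti <= t < tf.+1) orc_rew O c a d l v gam ti si t.

Definition valid_jobs (N W T : nat) (a d l : nat -> nat) (v : nat -> R) : Prop :=
  (forall t, (1 <= t <= T)%N ->
     [/\ (1 <= a t)%N, (a t <= d t <= N)%N,
         (1 <= l t <= (d t).+1 - a t)%N, ((d t).+1 - a t <= W)%N
       & 0 <= v t < 1])
  /\ (forall t, (1 <= t < T)%N -> (a t <= a t.+1)%N).

End OJS.

(* Main.v *)
Require Import Defs.
From mathcomp Require Import all_boot all_order all_algebra.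
From mathcomp Require Import zify ring lra.
Import Order.TTheory GRing.Theory Num.Theory.
Set Implicit Arguments. Unset Strict Implicit. Unset Printing Implicit Defensive.
Local Open Scope ring_scope.

Section Alloc.
Variable R : realFieldType.
Variable W : nat.
Implicit Types (p : action R W) (s : state W).

Lemma mincost_attained p a d l :
  has (fun k => icost p l k == mincost p a d l) (iota 0 (nstarts a d l)).
Proof.
rewrite /mincost.
apply: (big_ind (fun y => has (fun k => icost p l k == y) (iota 0 (nstarts a d l)))).
- by apply/hasP; exists 0%N => //; rewrite mem_iota.
- move=> x y /hasP [i Hi /eqP Ei] /hasP [j Hj /eqP Ej].
  rewrite /Order.min; case: (x < y)%O.
  + by apply/hasP; exists i => //; rewrite Ei.
  + by apply/hasP; exists j => //; rewrite Ej.
- move=> i _; apply/hasP; exists (val i) => //.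
  by rewrite mem_iota add0n ltn_ord.
Qed.

Lemma best_ok p a d l : icost p l (beststart p a d l) = mincost p a d l.
Proof.
have H := mincost_attained p a d l.
have := nth_find 0%N H.
rewrite /beststart nth_iota ?add0n; first by move/eqP.
by have := H; rewrite has_find size_iota.
Qed.

Lemma icost_ge p l k (j : 'I_W) :
  (forall i, 0 <= p i) -> (k <= j < k + l)%N -> p j <= icost p l k.
Proof.
move=> Hp Hj; rewrite /icost (bigD1 j) //=.
by rewrite lerDl sumr_ge0 // => i _.
Qed.

Lemma alloc_pos s (x : action R W) a d l v j :
  feasible s x -> v < 1 -> allocated x a d l v j -> (0 < s j)%N.
Proof.
move=> Hf Hv /andP [Hn Hj].
rewrite lt0n; apply/negP => /eqP s0.
have [_ x1] := Hf j.
have xj := x1 s0.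
have Hp : forall i, 0 <= x i by move=> i; have [/andP [h _] _] := Hf i; exact: ltW.
have := icost_ge Hp Hj.
rewrite best_ok xj => Hm.
move: Hn; rewrite -leNgt => Hm2.
have : (1 : R) < 1 by apply: (le_lt_trans Hm); apply: (le_lt_trans Hm2).
by rewrite ltxx.
Qed.

Definition ones : action R W := [ffun _ => 1].

Lemma ones_noalloc a d l v j :
  (1 <= l)%N -> (l <= d.+1 - a)%N -> (d.+1 - a <= W)%N -> v < 1 ->
  allocated ones a d l v j = false.
Proof.
move=> Hl1 Hl2 HW Hv.
rewrite /allocated.
suff H : 1 <= mincost ones a d l by rewrite (lt_le_trans Hv H).
have Hp : forall i, 0 <= ones i by move=> i; rewrite ffunE.
have key : forall k, (k + l <= W)%N -> 1 <= icost ones l k.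
  move=> k Hk.
  have kW : (k < W)%N by lia.
  have := @icost_ge ones l k (Ordinal kW) Hp.
  rewrite ffunE /=; apply; lia.
rewrite /mincost.
apply: (big_ind (fun y => 1 <= y)).
- by apply: key; lia.
- by move=> x y hx hy; rewrite le_min hx hy.
- move=> i _; apply: key.
  have := ltn_ord i; rewrite /nstarts; lia.
Qed.

End Alloc.
Section Sums.
Variable W : nat.

Definition ext (f : 'I_W -> nat) (j : nat) : nat :=
  if insub j is Some k then f k else 0%N.

Lemma sum_ext f : \sum_(k < W) f k = \sum_(0 <= j < W) ext f j.
Proof. by rewrite big_mkord; apply: eq_bigr => k _; rewrite /ext valK. Qed.

Lemma ext_ge f j : (W <= j)%N -> ext f j = 0%N.
Proof. by move=> h; rewrite /ext insubF // ltnNge h. Qed.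

Lemma ext_insubd f (k0 : 'I_W) j : (j < W)%N -> ext f j = f (insubd k0 j).
Proof.
move=> h; rewrite /ext /insubd; case: insubP => [k _ _ //|].
by rewrite h.
Qed.

Lemma shift_sum (f : nat -> nat) n d : (forall j, (n <= j)%N -> f j = 0%N) ->
  (\sum_(0 <= k < n) f (k + d) + \sum_(0 <= k < d) f k = \sum_(0 <= k < n) f k)%N.
Proof.
move=> Hf; elim: d => [|d IH].
  by rewrite [\sum_(0 <= k < 0) _]big_geq // addn0; apply: eq_bigr => k _; rewrite addn0.
rewrite big_nat_recr //= -IH.
have E : (\sum_(0 <= k < n.+1) f (k + d) = f d + \sum_(0 <= k < n) f (k + d.+1))%N.
  rewrite big_nat_recl //; congr (_ + _)%N.
  by apply: eq_bigr => k _; rewrite addSnnS.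
have E2 : (\sum_(0 <= k < n.+1) f (k + d) = \sum_(0 <= k < n) f (k + d))%N.
  by rewrite big_nat_recr //= (Hf (n + d)%N) ?leq_addr // addn0.
rewrite E2 in E; rewrite E; lia.
Qed.

Lemma count_ge n d : (\sum_(0 <= k < n) (n <= k + d)%N = minn n d)%N.
Proof.
elim: n => [|n IH]; first by rewrite big_geq // min0n.
rewrite big_nat_recl //.
have -> : (\sum_(0 <= i < n) (n.+1 <= i.+1 + d)%N = \sum_(0 <= i < n) (n <= i + d)%N)%N.
  by apply: eq_bigr => i _; rewrite addSn ltnS.
rewrite IH add0n; case: (leqP n.+1 d) => h /=; lia.
Qed.

Lemma step_bound (c : nat -> nat) C (hc : forall i, (c i <= C)%N) a a'
    (s : state W) (b : 'I_W -> bool) :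
  (a <= a')%N -> (forall j, b j -> (0 < s j)%N) ->
  (\sum_(j < W) (b j : nat) + \sum_(j < W) next_state c a a' s b j
     <= \sum_(j < W) s j + C * (a' - a))%N.
Proof.
move=> Haa Hb.
set dl := (a' - a)%N.
set e := ext (fun k => s k - b k)%N.
have H1 : forall j, (ext (next_state c a a' s b) j <= e (j + dl) + C * (W <= j + dl)%N)%N.
  move=> j; case: (ltnP j W) => hj; last by rewrite ext_ge.
  rewrite (ext_insubd _ (Ordinal hj)) // ffunE /=.
  have -> : insubd (Ordinal hj) j = Ordinal hj.
    by apply: val_inj; rewrite val_insubd /= hj.
  case: ifP => /= hc2.
  - have h2 : (j + dl < W)%N by lia.
    rewrite /e (ext_insubd _ (Ordinal hj)) //.
    have -> : (W <= j + dl)%N = false by lia.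
    rewrite muln0 addn0.
    have -> : insubd (Ordinal hj) (a' + j - a)%N = insubd (Ordinal hj) (j + dl)%N.
      by congr insubd; lia.
    by case: (b _).
  - have h2 : (W <= j + dl)%N by lia.
    by rewrite h2 muln1 (leq_trans (hc _)) // leq_addl.
have H2 : (\sum_(j < W) next_state c a a' s b j <= \sum_(0 <= j < W) e j + C * dl)%N.
  rewrite sum_ext.
  apply: leq_trans; first by apply: leq_sum => j _; exact: H1.
  rewrite big_split /= -big_distrr /= count_ge.
  apply: leq_add.
    rewrite -(shift_sum (f := e) (n := W) dl); first exact: leq_addr.
    by move=> j hj; rewrite /e ext_ge.
  by rewrite leq_mul2l geq_minr orbT.
have H3 : (\sum_(j < W) (b j : nat) + \sum_(0 <= j < W) e j = \sum_(j < W) s j)%N.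
  rewrite (sum_ext (fun j => (b j : nat))) (sum_ext s) -big_split /=.
  apply: eq_big_nat => j /andP [_ hj].
  rewrite /e !(ext_insubd _ (Ordinal hj)) //.
  set k := insubd _ _.
  by have := Hb k; case: (b k) => /= h; [have := h isT|]; lia.
rewrite -H3 -addnA leq_add2l; exact: H2.
Qed.

End Sums.

Definition dec (R : realFieldType) W (gam : policy R W) (at0 : nat) (sg sh : state W) : action R W :=
  if [forall k, (sg k <= sh k)%N] then gam at0 sg else ones R W.

Definition ostep (R : realFieldType) W (gam : policy R W) (ti : nat)
  (acc : nat * state W * state W)
  (e : nat * (state W -> action R W -> R) * (state W -> action R W -> state W)) :=
  (acc.1.1.+1, e.2 acc.1.2 (gam e.1.1 acc.1.2),
   if (ti <= acc.1.1)%N then e.2 acc.2 (dec gam e.1.1 acc.1.2 acc.2) else acc.2).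

Definition ofold (R : realFieldType) W (gam : policy R W) ti (s0 si : state W) (h : history R W) :=
  foldl (ostep gam ti) (1%N, s0, si) h.

Definition afirst (R : realFieldType) W (h : history R W) (at0 : nat) :=
  head at0 [seq e.1.1 | e <- h].

Definition orc (R : realFieldType) W (c : nat -> nat) : oracle R W :=
  fun gam ti si h at0 =>
    let F := ofold gam ti (start_state W c (fun _ => afirst h at0)) si h in
    dec gam at0 F.1.2 F.2.

Lemma dec_sync (R : realFieldType) W (gam : policy R W) at0 (sg sh : state W) :
  [forall k, (sg k <= sh k)%N] -> dec gam at0 sg sh = gam at0 sg.
Proof. by rewrite /dec => ->. Qed.

Lemma dec_nsync (R : realFieldType) W (gam : policy R W) at0 (sg sh : state W) :
  ~~ [forall k, (sg k <= sh k)%N] -> dec gam at0 sg sh = ones R W.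
Proof. by rewrite /dec => /negbTE ->. Qed.

Section Main.
Variable R : realFieldType.
Variables (N C W T : nat) (c : nat -> nat).
Hypothesis hc : forall i, (c i <= C)%N.
Variables (a d l : nat -> nat) (v : nat -> R).
Hypothesis Hvalid : valid_jobs N W T a d l v.
Variable gam : policy R W.
Hypothesis Hgam : pricing_policy C gam.
Variables (ti : nat) (si : state W).
Hypothesis Hti : (1 <= ti <= T)%N.

Notation O := (orc c).
Notation S t := (pol_state c a d l v gam t.-1).
Notation OS n := (orc_state O c a d l v gam ti si n).

Lemma hist_first t : (1 <= t)%N -> afirst (hist W c a d l v t) (a t) = a 1%N.
Proof. by case: t => [|[|t]]. Qed.

Lemma fold_eq t : (1 <= t)%N ->
  ofold gam ti (start_state W c a) si (hist W c a d l v t) =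
  (t, S t, OS (t - ti)).
Proof.
elim: t => [//|t IH] _.
case: t IH => [|t] IH.
  rewrite /ofold /=; have -> : (1 - ti = 0)%N by lia. by [].
have -> : hist W c a d l v t.+2 =
   rcons (hist W c a d l v t.+1) (a t.+1, rew a d l v t.+1, trans c a d l v t.+1).
  have E : iota 1 t.+1 = rcons (iota 1 t) t.+1.
    by rewrite -cats1 -[t.+1]addn1 iotaD /= add1n addn1.
  by rewrite /hist (_ : (t.+2).-1 = t.+1) // (_ : (t.+1).-1 = t) // E map_rcons.
rewrite /ofold foldl_rcons -/(ofold _ _ _ _ _) IH //.
rewrite /ostep /=.
congr (_, _, _).
case: ifP => h.
- have -> : (t.+2 - ti = (t.+1 - ti).+1)%N by lia.
  rewrite /=.
  have -> : (ti + (t.+1 - ti) = t.+1)%N by lia.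
  rewrite /orc /= hist_first //.
  have -> : start_state W c (fun _ : nat => a 1%N) = start_state W c a by [].
  by rewrite IH.
- by have -> : (t.+2 - ti = t.+1 - ti)%N by lia.
Qed.

Lemma O_eq t : (ti <= t)%N ->
  O gam ti si (hist W c a d l v t) (a t) = dec gam (a t) (S t) (OS (t - ti)).
Proof.
move=> h.
have t1 : (1 <= t)%N by case/andP: Hti => h1 _; exact: leq_trans h1 h.
rewrite /orc /= hist_first //.
have -> : start_state W c (fun _ : nat => a 1%N) = start_state W c a by [].
by rewrite fold_eq.
Qed.

Lemma act_eq n : orc_act O c a d l v gam ti si n = dec gam (a (ti + n)) (S (ti + n)) (OS n).
Proof. by rewrite /orc_act O_eq ?leq_addr // addKn. Qed.

Lemma pol_is_state n : is_state C (pol_state c a d l v gam n).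
Proof.
elim: n => [|n IH] k /=; first by rewrite ffunE.
rewrite /trans /next_state ffunE /=; case: ifP => _ //.
exact: leq_trans (leq_subr _ _) (IH _).
Qed.

Lemma feas_pol t : feasible (S t) (gam (a t) (S t)).
Proof. exact: Hgam (pol_is_state _). Qed.

Lemma valid_t t : (1 <= t <= T)%N ->
  [/\ (1 <= l t)%N, (l t <= (d t).+1 - a t)%N, ((d t).+1 - a t <= W)%N & v t < 1].
Proof.
case: Hvalid => H _ /H [_ _ /andP [h1 h2] h3 /andP [_ h4]]; by split.
Qed.

Lemma mono t : (1 <= t < T)%N -> (a t <= a t.+1)%N.
Proof. by case: Hvalid => _ H /H. Qed.

Lemma ones_noalloc_t t j : (1 <= t <= T)%N ->
  allocated (ones R W) (a t) (d t) (l t) (v t) j = false.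
Proof. by move=> /valid_t [h1 h2 h3 h4]; apply: ones_noalloc. Qed.

Lemma S_succ t : (1 <= t)%N ->
  S t.+1 = trans c a d l v t (S t) (gam (a t) (S t)).
Proof. by case: t. Qed.

Lemma deficit n : (ti + n <= T)%N -> forall k,
  (OS n k < S (ti + n) k)%N -> (a (ti + n) + k < a ti + W)%N.
Proof.
elim: n => [|n IH] Hn k.
  by rewrite addn0 ltn_add2l ltn_ord.
have t1 : (1 <= ti + n)%N by case/andP: Hti => h _; exact: leq_trans h (leq_addr _ _).
rewrite addnS S_succ //= O_eq ?leq_addr // addKn.
rewrite /trans /next_state !ffunE /=.
case: ifP => hin; last by rewrite ltnn.
set j := insubd k _.
have hmono : (a (ti + n) <= a (ti + n).+1)%N by apply: mono; lia.
have Hj : (nat_of_ord j = a (ti + n).+1 + k - a (ti + n))%N.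
  by rewrite /j val_insubd; case/andP: hin => h1 h2; rewrite ifT //; lia.
move=> Hlt.
have Hlt2 : (OS n j < S (ti + n) j)%N.
  move: Hlt.
  case: (boolP [forall k0, (S (ti + n) k0 <= OS n k0)%N]) => hs.
  - rewrite (dec_sync _ _ hs).
    case: (allocated _ _ _ _ _ j) => /=; lia.
  - rewrite (dec_nsync _ _ hs) ones_noalloc_t /=; [| lia].
    case: (allocated _ _ _ _ _ j) => /=; lia.
have Hn2 : (ti + n <= T)%N by lia.
have := IH Hn2 j Hlt2.
lia.
Qed.


Lemma pay_le_cnt (s : state W) (x : action R W) a0 d0 l0 v0 : feasible s x ->
  payment x a0 d0 l0 v0 <= ((\sum_(j < W) (allocated x a0 d0 l0 v0 j : nat))%N)%:R.
Proof.
move=> Hf; rewrite /payment natr_sum big_mkcond /=; apply: ler_sum => j _.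
case: ifP => _ /=; last by [].
by have [/andP [_ h] _] := Hf j.
Qed.

Definition cnt t := (\sum_(j < W)
   (allocated (gam (a t) (S t)) (a t) (d t) (l t) (v t) j : nat))%N.
Definition Phi t := (\sum_(j < W) S t j)%N.

Lemma term_bound t : (ti <= t <= T)%N ->
  pol_rew c a d l v gam t - orc_rew O c a d l v gam ti si t <=
  (((a t < a ti + W)%N : nat) * cnt t)%N%:R.
Proof.
move=> /andP [h1 h2].
rewrite /pol_rew /orc_rew /rew act_eq subnKC //.
case: (boolP [forall k0, (S t k0 <= OS (t - ti) k0)%N]) => hs.
- by rewrite (dec_sync _ _ hs) subrr ler0n.
- rewrite (dec_nsync _ _ hs).
  have -> : payment (ones R W) (a t) (d t) (l t) (v t) = 0.
    rewrite /payment big_pred0 // => j; rewrite ones_noalloc_t //; lia.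
  move/forallPn: hs => [k]; rewrite -ltnNge => hk.
  have := @deficit (t - ti); rewrite subnKC // => /(_ h2 k hk) hlt.
  rewrite (_ : (a t < a ti + W)%N) ?mul1n; last lia.
  rewrite subr0; exact: pay_le_cnt (feas_pol t).
Qed.

Lemma cnt_le_Phi t : (1 <= t <= T)%N -> (cnt t <= Phi t)%N.
Proof.
move=> ht; rewrite /cnt /Phi; apply: leq_sum => j _.
case E: (allocated _ _ _ _ _ j) => //=.
have [_ _ _ hv] := valid_t ht.
exact: alloc_pos (feas_pol t) hv E.
Qed.

Lemma step_t t : (1 <= t < T)%N -> (cnt t + Phi t.+1 <= Phi t + C * (a t.+1 - a t))%N.
Proof.
move=> ht.
have ht1 : (1 <= t)%N by case/andP: ht.
have ht2 : (1 <= t <= T)%N by lia.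
have [_ _ _ hv] := valid_t ht2.
rewrite /Phi S_succ // /trans /cnt.
apply: step_bound => //; first exact: mono.
move=> j hj; exact: alloc_pos (feas_pol t) hv hj.
Qed.

Lemma mono_le t k : (1 <= t)%N -> (t + k <= T)%N -> (a t <= a (t + k))%N.
Proof.
move=> h1; elim: k => [|k IH] h2; first by rewrite addn0.
have h3 : (t + k <= T)%N by rewrite addnS in h2; exact: ltnW.
rewrite addnS; apply: leq_trans (IH h3) (mono _); lia.
Qed.

Lemma acc m : (ti + m <= T)%N ->
  (\sum_(ti <= t < ti + m) (((a t < a ti + W)%N : nat) * cnt t)
   + ((a (ti + m) < a ti + W)%N : nat) * Phi (ti + m)
   <= Phi ti + C * minn (a (ti + m) - a ti) W.-1)%N.
Proof.
have ti1 : (1 <= ti)%N by case/andP: Hti.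
elim: m => [|m IH] Hm.
  rewrite addn0 big_geq // add0n.
  by case: (a ti < a ti + W)%N; rewrite ?mul1n ?mul0n; lia.
rewrite addnS big_nat_recr /=; last lia.
rewrite addnS in Hm.
have IH' := IH (ltnW Hm).
set t := (ti + m)%N in IH' Hm *.
have hmo : (a t <= a t.+1)%N by apply: mono; lia.
have h0 : (a ti <= a t)%N by exact: (@mono_le ti m ti1 (ltnW Hm)).
have hs := @step_t t ltac:(lia).
have hc2 := @cnt_le_Phi t ltac:(lia).
have Hmin : (C * minn (a t - a ti) W.-1 <= C * minn (a t.+1 - a ti) W.-1)%N.
  by rewrite leq_mul2l; apply/orP; right; lia.
case E1: (a t.+1 < a ti + W)%N; case E0: (a t < a ti + W)%N;
  rewrite ?mul1n ?mul0n ?addn0 in IH' *; try lia.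
have -> : minn (a t.+1 - a ti) W.-1 = (a t.+1 - a ti)%N by lia.
have E2 : minn (a t - a ti) W.-1 = (a t - a ti)%N by lia.
rewrite E2 in IH'.
have -> : (C * (a t.+1 - a ti) = C * (a t - a ti) + C * (a t.+1 - a t))%N.
  by rewrite -mulnDr; congr (_ * _)%N; lia.
lia.
Qed.

Lemma final_nat tf : (ti <= tf <= T)%N ->
  (\sum_(ti <= t < tf.+1) (((a t < a ti + W)%N : nat) * cnt t) <= 2 * C * W)%N.
Proof.
move=> /andP [h1 h2].
have ti1 : (1 <= ti)%N by case/andP: Hti.
rewrite big_nat_recr //=.
have := @acc (tf - ti); rewrite subnKC // => /(_ h2) H.
have hc2 := @cnt_le_Phi tf ltac:(lia).
have HPhi : (Phi ti <= C * W)%N.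
  rewrite /Phi; apply: (@leq_trans (\sum_(j < W) C)); first by apply: leq_sum => j _; exact: pol_is_state.
  by rewrite sum_nat_const card_ord mulnC.
have Hm : (C * minn (a tf - a ti) W.-1 <= C * W)%N.
  by rewrite leq_mul2l; apply/orP; right; lia.
have E : (2 * C * W = C * W + C * W)%N by rewrite -mulnA mul2n addnn.
rewrite E.
have Hc : ((((a tf < a ti + W)%N : nat) * cnt tf) <= ((a tf < a ti + W)%N : nat) * Phi tf)%N.
  by rewrite leq_mul2l hc2 orbT.
lia.
Qed.

Lemma main_feas n : feasible (OS n) (orc_act O c a d l v gam ti si n).
Proof.
rewrite act_eq.
case: (boolP [forall k0, (S (ti + n) k0 <= OS n k0)%N]) => hs.
- rewrite (dec_sync _ _ hs).
  have Hf := feas_pol (ti + n).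
  move=> k; have [h1 h2] := Hf k; split => // h0; apply: h2.
  by move/forallP: hs => /(_ k); rewrite h0 leqn0 => /eqP.
- rewrite (dec_nsync _ _ hs) => k; rewrite ffunE; split => //.
  by rewrite ltr01 lexx.
Qed.

Lemma main_regret tf : (ti <= tf <= T)%N ->
  chasing_regret O c a d l v gam ti si tf <= (2 * C * W)%N%:R.
Proof.
move=> htf.
rewrite /chasing_regret -sumrB.
apply: le_trans.
  apply: (ler_sum_nat (G := fun t => ((((a t < a ti + W)%N : nat) * cnt t)%N)%:R)).
  move=> t /andP [h1 h2]; apply: term_bound; lia.
rewrite -natr_sum ler_nat; exact: final_nat.
Qed.

End Main.

Theorem lemma1 (R : realFieldType) (N C W T : nat) (c : nat -> nat) :
  (forall i, (c i <= C)%N) ->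
  exists O : oracle R W,
  forall (a d l : nat -> nat) (v : nat -> R),
    valid_jobs N W T a d l v ->
    forall gam : policy R W, pricing_policy C gam ->
    forall (ti : nat) (si : state W),
      (1 <= ti <= T)%N -> is_state C si ->
      (forall n, (ti + n <= T)%N ->
         feasible (orc_state O c a d l v gam ti si n)
                  (orc_act O c a d l v gam ti si n)) /\
      (forall tf, (ti <= tf <= T)%N ->
         chasing_regret O c a d l v gam ti si tf <= (2 * C * W)%:R).
Proof.
move=> hc; exists (orc c) => a d l v Hv gam Hg ti si Hti _; split.
- by move=> n _; exact: (main_feas hc a d l v Hg si Hti n).
- move=> tf Htf. have := (main_regret hc Hv Hg si Hti Htf).
  exact.
Qed.
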